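(* Let $H=\sum_{a=1}^m\lambda_aE_a$ be a $k$-local Hamiltonian and $G=\sum_{b=1}^{m'}\kappa_bF_b$ a $k'$-local Hamiltonian. Then, for a universal implied constant, $$\|[H,G]\|_{2,\mathrm{loc}}\lesssim k'k\,\|H\|_{1,\mathrm{loc}}\|G\|_{2,\mathrm{loc}},\qquad \|[H,G]\|_F\lesssim k'k\,\|H\|_{1,\mathrm{loc}}\|G\|_F.$$
   Context: $\mathcal{P}$ denotes the set of $n$-qubit tensor products of Pauli matrices; $\mathrm{supp}(P)$ is the set of qubits on which $P$ acts non-trivially. A $k$-local Hamiltonian is $H=\sum_a\lambda_aE_a$ with real $\lambda_a$ and distinct non-identity Paulis $E_a$ with $|\mathrm{supp}(E_a)|\le k$. For any operator $A=\sum_{X\in\mathcal{P}}\xi_XX$ (Pauli expansion, possibly complex coefficients), $\|A\|_{1,\mathrm{loc}}=\max_{i\in[n]}\sum_{X:\,i\in\mathrm{supp}(X)}|\xi_X|$ and $\|A\|_{2,\mathrm{loc}}=\max_{i\in[n]}\big(\sum_{X:\,i\in\mathrm{supp}(X)}|\xi_X|^2\big)^{1/2}$. $\|\cdot\|_F$ is the Frobenius norm and $\lesssim$ hides a universal constant. *)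

(* Defs.v *)
From mathcomp Require Import all_boot all_order all_algebra.
From mathcomp Require Import reals complex.
Set Implicit Arguments. Unset Strict Implicit. Unset Printing Implicit Defensive.
Import Order.TTheory GRing.Theory Num.Theory.
Local Open Scope ring_scope.
Local Open Scope complex_scope.

Definition bits (n : nat) := {ffun 'I_n -> bool}.

(** Operators on the n-qubit Hilbert space (C^2)^{(x) n}, as matrices
    indexed by computational basis states. *)
Definition op (R : realType) (n : nat) := bits n -> bits n -> R[i].

Section Ops.
Variables (R : realType) (n : nat).
Local Notation C := R[i].
Local Notation op := (op R n).

Definition op_add (A B : op) : op := fun x y => A x y + B x y.
Definition op_scale (c : C) (A : op) : op := fun x y => c * A x y.
Definition op_zero : op := fun _ _ => 0.
Definition op_mul (A B : op) : op := fun x y => \sum_(z : bits n) A x z * B z y.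
Definition commutator (A B : op) : op := op_add (op_mul A B) (op_scale (-1) (op_mul B A)).
Definition trace (A : op) : C := \sum_(x : bits n) A x x.

Definition frob (A : op) : R :=
  Num.sqrt (\sum_(x : bits n) \sum_(y : bits n) Normc.normc (A x y) ^+ 2).

(** n-qubit Pauli strings: 0 = I, 1 = X, 2 = Y, 3 = Z on each qubit. *)
Definition pauli := {ffun 'I_n -> 'I_4}.
Definition supp (P : pauli) : {set 'I_n} := [set i | nat_of_ord (P i) != 0%N].

Definition sigma (p : 'I_4) (a b : bool) : C :=
  match nat_of_ord p with
  | 0%N => if a == b then 1 else 0
  | 1%N => if a != b then 1 else 0
  | 2%N => if a == b then 0 else if a then 'i else - 'i
  | _ => if a == b then (if a then -1 else 1) else 0
  end.

Definition pmat (P : pauli) : op := fun x y => \prod_(i : 'I_n) sigma (P i) (x i) (y i).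

(** Pauli-expansion coefficient: A = sum_X xi_X X with xi_X = 2^{-n} tr(X A). *)
Definition pcoef (A : op) (X : pauli) : C := (2 ^+ n)^-1 * trace (op_mul (pmat X) A).

(** local norms ||A||_{1,loc}, ||A||_{2,loc} (maximum over qubits; 0 if n = 0) *)
Definition norm1loc (A : op) : R :=
  \big[Num.max/0]_(i : 'I_n) \sum_(X : pauli | i \in supp X) Normc.normc (pcoef A X).
Definition norm2loc (A : op) : R :=
  \big[Num.max/0]_(i : 'I_n)
     Num.sqrt (\sum_(X : pauli | i \in supp X) Normc.normc (pcoef A X) ^+ 2).

Definition ham (m : nat) (lam : 'I_m -> R) (E : 'I_m -> pauli) : op :=
  fun x y => \sum_(a < m) (lam a)%:C * pmat (E a) x y.

(** (lam, E) describe a k-local Hamiltonian: distinct, non-identity Paulis of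
    support size at most k (real coefficients are built into the type of lam). *)
Definition k_local (k m : nat) (E : 'I_m -> pauli) : Prop :=
  injective E /\ (forall a, supp (E a) != set0) /\ (forall a, (#|supp (E a)| <= k)%N).
End Ops.

(* Main.v *)
Require Import Defs.
From mathcomp Require Import all_boot all_order all_algebra.
From mathcomp Require Import reals complex.
From mathcomp Require Import ring lra zify.
Set Implicit Arguments. Unset Strict Implicit. Unset Printing Implicit Defensive.
Import Order.TTheory GRing.Theory Num.Theory.
Local Open Scope ring_scope.
Section S.
Local Open Scope complex_scope.
Variable R : realType.
Local Notation C := R[i].
Definition o1 : 'I_4 := @Ordinal 4 1 isT.
Definition o2 : 'I_4 := @Ordinal 4 2 isT.
Definition o3 : 'I_4 := @Ordinal 4 3 isT.
Definition qmul (p q : 'I_4) : 'I_4 :=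
 if p == ord0 then q else if q == ord0 then p else if p == q then ord0 else
 if (p + q == 3)%N then o3 else if (p + q == 4)%N then o2 else o1.
Definition qph (p q : 'I_4) : C :=
 if (p == ord0) || (q == ord0) || (p == q) then 1 else
 if ((p == o1) && (q == o2)) || ((p == o2) && (q == o3)) || ((p == o3) && (q == o1)) then 'i else - 'i.
Lemma ii : 'i * 'i = -1 :> C. Proof. by rewrite -expr2 sqr_i. Qed.
Lemma qubit_mul p q a b : \sum_(c : bool) sigma R p a c * sigma R q c b = qph p q * sigma R (qmul p q) a b.
Proof.
rewrite big_bool.
case: p => [[|[|[|[|p]]]] Hp] //; case: q => [[|[|[|[|q]]]] Hq] //;
case: a; case: b; rewrite /sigma /qph /qmul /=;
rewrite ?ii ?mulr0 ?mul0r ?mulr1 ?mul1r ?addr0 ?add0r ?mulrN ?mulNr ?opprK ?ii //.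

all: try by rewrite ?ii.
all: by simpc.
Qed.

Ltac q4 p := case: p => [[|[|[|[|?]]]] ?] //.

Lemma qmulC p q : qmul p q = qmul q p.
Proof. by q4 p; q4 q; apply/val_inj. Qed.
Lemma qmul_eq0 p q : (qmul p q == ord0) = (p == q).
Proof. by q4 p; q4 q. Qed.
Lemma qmulK p q : qmul p (qmul p q) = q.
Proof. by q4 p; q4 q; apply/val_inj. Qed.
Lemma qmul_inj p q q' : qmul p q = qmul p q' -> q = q'.
Proof. by move=> H; rewrite -(qmulK p q) H qmulK. Qed.
Lemma qmul_supp p q : qmul p q != ord0 -> (p != ord0) || (q != ord0).
Proof. by q4 p; q4 q. Qed.
Lemma qph_sym p q : (p == ord0) || (q == ord0) || (p == q) -> qph p q = qph q p.
Proof. by q4 p; q4 q. Qed.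
Lemma qph_diag p : qph p p = 1.
Proof. by rewrite /qph eqxx !orbT. Qed.
Lemma normc_qph p q : Normc.normc (qph p q) = 1.
Proof.
have Hi : Normc.normc ('i : C) = 1 by rewrite /= expr0n /= add0r expr1n sqrtr1.
have Hmi : Normc.normc (- 'i : C) = 1 by rewrite normcN.
by q4 p; q4 q; rewrite /qph /= ?expr0n ?expr1n /= ?addr0 ?add0r ?sqrtr1 ?oppr0 ?expr0n /= ?addr0 ?sqrtr1.
Qed.
Lemma qubit_tr p : \sum_(c : bool) sigma R p c c = if p == ord0 then 2 else 0.
Proof. by rewrite big_bool; q4 p; rewrite /sigma /= ?addrN ?subrr ?addr0 // addNr. Qed.
Lemma sigma_conj p a b : conjc (sigma R p a b) = sigma R p b a.
Proof. q4 p; case: a; case: b; rewrite /sigma /= ?conjc1 ?conjc0 //; try simpc; try reflexivity. Qed.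
End S.

Section Multi.
Local Open Scope complex_scope.
Variables (R : realType) (n : nat).
Local Notation C := R[i].
Local Notation pauli := (pauli n).
Implicit Types P Q X W : pauli.

Definition pxor P Q : pauli := [ffun i => qmul (P i) (Q i)].
Definition pph P Q : C := \prod_(i < n) qph R (P i) (Q i).

Lemma pxorC P Q : pxor P Q = pxor Q P.
Proof. by apply/ffunP => i; rewrite !ffunE qmulC. Qed.

Lemma pmat_mul P Q x y : op_mul (pmat R P) (pmat R Q) x y = pph P Q * pmat R (pxor P Q) x y.
Proof.
rewrite /op_mul /pmat /pph.
transitivity (\sum_(z : bits n) \prod_(i < n) (sigma R (P i) (x i) (z i) * sigma R (Q i) (z i) (y i))).
  by apply: eq_bigr => z _; rewrite big_split.
rewrite -(bigA_distr_bigA (fun i c => sigma R (P i) (x i) c * sigma R (Q i) c (y i))) /=.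
rewrite -big_split /=; apply: eq_bigr => i _; by rewrite qubit_mul ffunE.
Qed.

Lemma trace_pmat P : trace (pmat R P) = \prod_(i < n) (if P i == ord0 then 2 else 0).
Proof.
rewrite /trace /pmat.
transitivity (\prod_(i<n) \sum_(c : bool) sigma R (P i) c c); last first.
  by apply eq_bigr => i _; rewrite qubit_tr.
by rewrite bigA_distr_bigA.
Qed.

Lemma pph_diag P : pph P P = 1.
Proof. by rewrite /pph big1 // => i _; rewrite qph_diag. Qed.

Lemma two_n_neq0 : (2 ^+ n : C) != 0.
Proof. by rewrite expf_neq0 // pnatr_eq0. Qed.

Lemma trace_mul_pmat X W : trace (op_mul (pmat R X) (pmat R W)) = if X == W then 2 ^+ n else 0.
Proof.
have -> : trace (op_mul (pmat R X) (pmat R W)) = pph X W * trace (pmat R (pxor X W)).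
  by rewrite /trace mulr_sumr; apply eq_bigr => x _; rewrite pmat_mul.
rewrite trace_pmat.
case: eqP => [->|/eqP neq].
  rewrite pph_diag mul1r (eq_bigr (fun=> 2)) => [|i _]; last by rewrite ffunE qmul_eq0 eqxx.
  by rewrite prodr_const card_ord.
have : ~~ [forall i, X i == W i].
  by apply: contra neq => /forallP H; apply/eqP/ffunP => i; apply/eqP/H.
rewrite negb_forall => /existsP [i Hi].
by rewrite (bigD1 i) //= ffunE qmul_eq0 (negbTE Hi) mul0r mulr0.
Qed.

Lemma pcoef_pmat X W : pcoef (pmat R W) X = if X == W then 1 else 0.
Proof.
rewrite /pcoef trace_mul_pmat; case: eqP => _; last by rewrite mulr0.
by rewrite mulVf // two_n_neq0.
Qed.

Definition psum (J : finType) (w : J -> C) (P : J -> pauli) : op R n :=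
  fun x y => \sum_j w j * pmat R (P j) x y.

Lemma pcoef_ext (A B : op R n) X : (forall x y, A x y = B x y) -> pcoef A X = pcoef B X.
Proof.
move=> H; rewrite /pcoef /trace /op_mul; congr (_ * _); apply eq_bigr => x _.
by apply eq_bigr => z _; rewrite H.
Qed.

Lemma frob_ext (A B : op R n) : (forall x y, A x y = B x y) -> frob A = frob B.
Proof.
by move=> H; rewrite /frob; congr Num.sqrt; apply eq_bigr => x _; apply eq_bigr => y _; rewrite H.
Qed.

Lemma pcoef_psum (J : finType) (w : J -> C) (P : J -> pauli) X :
  pcoef (psum w P) X = \sum_j (if X == P j then w j else 0).
Proof.
rewrite /pcoef.
have -> : trace (op_mul (pmat R X) (psum w P)) = \sum_j w j * trace (op_mul (pmat R X) (pmat R (P j))).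
  rewrite /trace /op_mul /psum.
  transitivity (\sum_x \sum_z \sum_j w j * (pmat R X x z * pmat R (P j) z x)).
    apply eq_bigr => x _; apply eq_bigr => z _; rewrite mulr_sumr; apply eq_bigr => j _.
    by rewrite mulrCA.
  under eq_bigr do rewrite exchange_big. rewrite exchange_big.
  apply eq_bigr => j _; rewrite mulr_sumr; apply eq_bigr => x _; by rewrite mulr_sumr.
rewrite mulr_sumr; apply eq_bigr => j _.
rewrite mulrCA trace_mul_pmat; case: eqP => _; last by rewrite !mulr0.
by rewrite mulVf ?mulr1 // two_n_neq0.
Qed.

Lemma op_mul_psum (J K : finType) (w : J -> C) (P : J -> pauli) (v : K -> C) (Q : K -> pauli) x y :
  op_mul (psum w P) (psum v Q) x y =
  \sum_j \sum_k w j * v k * pph (P j) (Q k) * pmat R (pxor (P j) (Q k)) x y.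
Proof.
rewrite /op_mul /psum.
transitivity (\sum_z \sum_j \sum_k w j * v k * (pmat R (P j) x z * pmat R (Q k) z y)).
  apply eq_bigr => z _; rewrite mulr_suml; apply eq_bigr => j _; rewrite mulr_sumr.
  by apply eq_bigr => k _; rewrite mulrACA.
rewrite exchange_big; apply eq_bigr => j _; rewrite exchange_big; apply eq_bigr => k _.
by rewrite -mulr_sumr -/(op_mul (pmat R (P j)) (pmat R (Q k)) x y) pmat_mul mulrA.
Qed.

Lemma commutator_psum (J K : finType) (w : J -> C) (P : J -> pauli) (v : K -> C) (Q : K -> pauli) x y :
  commutator (psum w P) (psum v Q) x y =
  psum (fun jk : J * K => w jk.1 * v jk.2 * (pph (P jk.1) (Q jk.2) - pph (Q jk.2) (P jk.1)))
       (fun jk => pxor (P jk.1) (Q jk.2)) x y.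
Proof.
rewrite /commutator /op_add /op_scale !op_mul_psum.
rewrite (exchange_big _ _ _ _ _ (fun k j => v k * w j * _ * _)).
rewrite mulr_sumr -big_split /= /psum.
rewrite -(pair_bigA _ (fun j k => w j * v k * (pph (P j) (Q k) - pph (Q k) (P j)) * pmat R (pxor (P j) (Q k)) x y)).
apply eq_bigr => j _; rewrite mulr_sumr -big_split /=; apply eq_bigr => k _.
rewrite pxorC; ring.
Qed.


Lemma normc_sqrC (z : C) : ((Normc.normc z) ^+ 2)%:C = z * conjc z.
Proof.
case: z => a b; rewrite /Normc.normc sqr_sqrtr ?addr_ge0 ?sqr_ge0 //.
simpc; by rewrite -!expr2 [b * a]mulrC addNr.
Qed.

Lemma pmat_conj P x y : conjc (pmat R P x y) = pmat R P y x.
Proof. rewrite /pmat rmorph_prod; apply eq_bigr => i _; exact: sigma_conj. Qed.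

Lemma trace_form P Q : \sum_x \sum_y pmat R P x y * conjc (pmat R Q x y) = if P == Q then 2^+n else 0.
Proof.
rewrite -trace_mul_pmat /trace /op_mul; apply eq_bigr => x _; apply eq_bigr => y _.
by rewrite pmat_conj.
Qed.

Lemma sum_mul_conj (I : finType) (F : I -> C) :
  (\sum_i F i) * conjc (\sum_i F i) = \sum_i \sum_l F i * conjc (F l).
Proof. by rewrite rmorph_sum mulr_suml; apply eq_bigr => i _; rewrite mulr_sumr. Qed.

Lemma sum4_swap (A B D E : finType) (F : A -> B -> D -> E -> C) :
  \sum_a \sum_b \sum_c \sum_d F a b c d = \sum_c \sum_d \sum_a \sum_b F a b c d.
Proof.
under eq_bigr do rewrite exchange_big.
rewrite exchange_big.
under eq_bigr do under eq_bigr do rewrite exchange_big.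
by under eq_bigr do rewrite exchange_big.
Qed.

Lemma sum3_swap (A B D : finType) (F : A -> B -> D -> C) :
  \sum_a \sum_b \sum_c F a b c = \sum_b \sum_c \sum_a F a b c.
Proof.
rewrite exchange_big.
by under eq_bigr do rewrite exchange_big.
Qed.

Lemma frob2_psum (J : finType) (w : J -> C) (P : J -> pauli) :
  \sum_x \sum_y Normc.normc (psum w P x y) ^+ 2
  = 2 ^+ n * \sum_X Normc.normc (pcoef (psum w P) X) ^+ 2.
Proof.
apply: complexI; rewrite rmorphM rmorphXn rmorph_nat !rmorph_sum.
under eq_bigr do rewrite rmorph_sum.
rewrite /=.
under eq_bigr do under eq_bigr do rewrite normc_sqrC /psum sum_mul_conj.
under [in RHS]eq_bigr do rewrite normc_sqrC pcoef_psum sum_mul_conj.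
transitivity (\sum_j \sum_l w j * conjc (w l) * (if P j == P l then 2 ^+ n else 0)).
  under [in RHS]eq_bigr do under eq_bigr do rewrite -trace_form mulr_sumr.
  rewrite sum4_swap; apply eq_bigr => j _; apply eq_bigr => l _; apply eq_bigr => x _.
  rewrite mulr_sumr; apply eq_bigr => y _.
  by rewrite rmorphM mulrACA.
symmetry.
transitivity (2 ^+ n * \sum_X \sum_j \sum_l
   (if X == P j then (if P j == P l then w j * conjc (w l) else 0) else 0)).
  congr (_ * _); apply eq_bigr => X _; apply eq_bigr => j _; apply eq_bigr => l _.
  case: eqP => [->|_]; last by rewrite mul0r.
  by case: eqP => _; rewrite ?conjc0 ?mulr0.
rewrite sum3_swap mulr_sumr; apply eq_bigr => j _; rewrite mulr_sumr; apply eq_bigr => l _.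
rewrite -big_mkcond big_pred1_eq.
by case: eqP => _; rewrite ?mulr0 ?mul0r // mulrC.
Qed.

End Multi.

Section Real.
Local Open Scope complex_scope.
Variable R : realType.
Local Notation C := R[i].

Lemma normc_real (r : R) : Normc.normc (r%:C) = `|r|.
Proof. by rewrite /Normc.normc /= expr0n /= addr0 sqrtr_sqr. Qed.

Lemma normc_ge0 (z : C) : 0 <= Normc.normc z.
Proof. by case: z => a b; exact: sqrtr_ge0. Qed.

Lemma normc_sum (I : finType) (F : I -> C) :
  Normc.normc (\sum_i F i) <= \sum_i Normc.normc (F i).
Proof.
elim/big_rec2: _ => [|i y1 y2 _ H]; first by rewrite Normc.normc0.
by apply: le_trans (le_normcD _ _) _; rewrite lerD2l.
Qed.

Lemma normc_prod (I : finType) (F : I -> C) :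
  Normc.normc (\prod_i F i) = \prod_i Normc.normc (F i).
Proof. exact: (big_morph _ (@Normc.normcM R) (@Normc.normc1 R)). Qed.

Lemma CS (I : finType) (u v : I -> R) : (forall i, 0 <= u i) ->
  (\sum_i u i * v i) ^+ 2 <= (\sum_i u i) * (\sum_i u i * v i ^+ 2).
Proof.
move=> u0.
have E1 : (\sum_i u i * v i) ^+ 2 = \sum_i \sum_j (u i * v i) * (u j * v j).
  by rewrite expr2 mulr_suml; apply eq_bigr => i _; rewrite mulr_sumr.
have E2 : (\sum_i u i) * (\sum_i u i * v i ^+ 2) = \sum_i \sum_j u i * (u j * v j ^+ 2).
  by rewrite mulr_suml; apply eq_bigr => i _; rewrite mulr_sumr.
have E3 : (\sum_i u i) * (\sum_i u i * v i ^+ 2) = \sum_i \sum_j u j * (u i * v i ^+ 2).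
  by rewrite E2 exchange_big.
rewrite -(@ler_pM2l _ 2) // !mulr_natl !mulr2n.
rewrite [X in _ <= X + _]E2 E3 E1 -!big_split /=.
apply: ler_sum => i _; rewrite -!big_split /=; apply: ler_sum => j _.
have := mulr_ge0 (mulr_ge0 (u0 i) (u0 j)) (sqr_ge0 (v i - v j)).
move=> H; nra.
Qed.

Lemma lebmax (I : finType) (F : I -> R) i0 : F i0 <= \big[Num.max/0]_i F i.
Proof.
rewrite /index_enum; have : i0 \in (index_enum I) by rewrite mem_index_enum.
rewrite /index_enum; elim: (Finite.enum I) => // a s IH.
rewrite in_cons big_cons => /orP [/eqP <-|H]; first by rewrite le_max lexx.
by rewrite le_max IH ?orbT.
Qed.

Lemma bmax_le (I : finType) (F : I -> R) B :
  0 <= B -> (forall i, F i <= B) -> \big[Num.max/0]_i F i <= B.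
Proof. by move=> B0 H; elim/big_ind: _ => // x y Hx Hy; rewrite ge_max Hx Hy. Qed.

Lemma bmax_ge0 (I : finType) (F : I -> R) : 0 <= \big[Num.max/0]_i F i.
Proof. by elim/big_rec: _ => // i x _ Hx; rewrite le_max Hx orbT. Qed.

Lemma sum_if_inj (J : finType) (T : eqType) (P : J -> T) (X : T) (c : R) :
  injective P -> 0 <= c -> \sum_j (if X == P j then c else 0) <= c.
Proof.
move=> injP c0; case: (pickP (fun j => X == P j)) => [j0 Hj0|Hn].
  rewrite (bigD1 j0) //= Hj0 big1 ?addr0 // => j Hj.
  case: eqP => // HX; exfalso; move/negP: Hj; apply.
  by apply/eqP/injP; rewrite -HX (eqP Hj0).
by rewrite big1 // => j _; rewrite Hn.
Qed.

Lemma sum_inj (J : finType) (T : finType) (P : J -> T) (w : J -> C) (g : T -> C -> R) :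
  injective P -> (forall X, g X 0 = 0) ->
  \sum_X g X (\sum_j if X == P j then w j else 0) = \sum_j g (P j) (w j).
Proof.
move=> injP g0.
transitivity (\sum_X \sum_j (if X == P j then g X (w j) else 0)).
  apply eq_bigr => X _; case: (pickP (fun j => X == P j)) => [j0 Hj0|Hn].
    have oth : forall j, j != j0 -> X == P j = false.
      move=> j Hj; apply/negbTE; apply: contra Hj => /eqP HX.
      by apply/eqP/injP; rewrite -HX (eqP Hj0).
    rewrite (bigD1 j0) //= Hj0 big1 ?addr0; last by move=> j Hj; rewrite oth.
    by rewrite (bigD1 j0) //= Hj0 big1 ?addr0 // => j Hj; rewrite oth.
  by rewrite !big1 ?g0 // => j _; rewrite Hn.
rewrite exchange_big; apply eq_bigr => j _; by rewrite -big_mkcond big_pred1_eq.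
Qed.

Lemma ov_bound (I T : finType) (c : I -> bool) (S : {set T}) (Tr : I -> {set T}) (f : I -> R) :
  (forall a, 0 <= f a) -> (forall a, c a -> exists2 j, j \in S & j \in Tr a) ->
  \sum_a (if c a then f a else 0) <= \sum_(j in S) \sum_a (if j \in Tr a then f a else 0).
Proof.
move=> f0 Hc; rewrite exchange_big /=; apply: ler_sum => a _.
have H0 : 0 <= \sum_(j in S) (if j \in Tr a then f a else 0).
  by apply: sumr_ge0 => j _; case: ifP.
case ca: (c a) => //; have [j jS jT] := Hc a ca.
rewrite (bigD1 j) //= jT lerDl; apply: sumr_ge0 => i _; by case: ifP.
Qed.

Lemma sum_set_bound (T : finType) (S : {set T}) (g : T -> R) B K :
  (forall j, g j <= B) -> 0 <= B -> (#|S| <= K)%N -> \sum_(j in S) g j <= K%:R * B.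
Proof.
move=> gB B0 SK; apply: le_trans (ler_sum _ (fun j _ => gB j)) _.
rewrite sumr_const -(mulr_natr B #|S|) mulrC; apply: ler_pM => //; by rewrite ler_nat.
Qed.

End Real.

Lemma in_supp n (P : pauli n) j : (j \in supp P) = (P j != ord0).
Proof. by rewrite inE. Qed.

Section Main.
Local Open Scope complex_scope.
Variables (R : realType) (n k k' m m' : nat).
Variables (lam : 'I_m -> R) (E : 'I_m -> pauli n) (kap : 'I_m' -> R) (F : 'I_m' -> pauli n).
Hypotheses (hE : k_local k E) (hF : k_local k' F).
Local Notation C := R[i].

Definition l a := `|lam a|.
Definition q b := `|kap b|.
Definition N1 := norm1loc (ham lam E).
Definition N2 := norm2loc (ham kap F).
Definition W a b := pxor (E a) (F b).
Definition Ac a b : bool := [exists j, (E a j != ord0) && (F b j != ord0) && (E a j != F b j)].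
Definition ov a b : bool := [exists j, (j \in supp (E a)) && (j \in supp (F b))].
Definition cw (p : 'I_m * 'I_m') : C :=
  (lam p.1)%:C * (kap p.2)%:C * (pph R (E p.1) (F p.2) - pph R (F p.2) (E p.1)).
Definition cP (p : 'I_m * 'I_m') := pxor (E p.1) (F p.2).
Definition gam Z : C := pcoef (psum cw cP) Z.

Lemma l_ge0 a : 0 <= l a. Proof. exact: normr_ge0. Qed.
Lemma q_ge0 b : 0 <= q b. Proof. exact: normr_ge0. Qed.
Lemma N1_ge0 : 0 <= N1. Proof. exact: bmax_ge0. Qed.
Lemma N2_ge0 : 0 <= N2. Proof. exact: bmax_ge0. Qed.

Lemma Einj : injective E. Proof. by case: hE. Qed.
Lemma Finj : injective F. Proof. by case: hF. Qed.
Lemma Ecard a : (#|supp (E a)| <= k)%N. Proof. by case: hE => _ []. Qed.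
Lemma Fcard b : (#|supp (F b)| <= k')%N. Proof. by case: hF => _ []. Qed.
Lemma Ene a : (0 < #|supp (E a)|)%N. Proof. by rewrite card_gt0; case: hE => _ []. Qed.
Lemma Fne b : (0 < #|supp (F b)|)%N. Proof. by rewrite card_gt0; case: hF => _ []. Qed.

Lemma comm_eq x y : commutator (ham lam E) (ham kap F) x y = psum cw cP x y.
Proof. exact: (commutator_psum (fun a => (lam a)%:C) E (fun b => (kap b)%:C) F). Qed.

Lemma gamE Z : gam Z = \sum_a \sum_b
  (if Z == W a b then (lam a)%:C * (kap b)%:C * (pph R (E a) (F b) - pph R (F b) (E a)) else 0).
Proof. by rewrite /gam pcoef_psum pair_bigA. Qed.

Lemma S1_eq i : \sum_(X | i \in supp X) Normc.normc (pcoef (ham lam E) X)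
  = \sum_a (if i \in supp (E a) then l a else 0).
Proof.
rewrite big_mkcond /=.
under eq_bigr do rewrite (pcoef_psum (fun a => (lam a)%:C) E).
rewrite (@sum_inj R _ _ E (fun a => (lam a)%:C) (fun X z => if i \in supp X then Normc.normc z else 0)) //; cbv beta.
- by apply: eq_bigr => a _; rewrite normc_real.
- exact: Einj.
- by move=> X; rewrite Normc.normc0; case: ifP.
Qed.

Lemma S1_le i : \sum_a (if i \in supp (E a) then l a else 0) <= N1.
Proof. rewrite -S1_eq; exact: (lebmax (fun i => \sum_(X | i \in supp X) Normc.normc (pcoef (ham lam E) X)) i). Qed.

Lemma S2_eq i : \sum_(X | i \in supp X) Normc.normc (pcoef (ham kap F) X) ^+ 2
  = \sum_b (if i \in supp (F b) then q b ^+ 2 else 0).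
Proof.
rewrite big_mkcond /=.
under eq_bigr do rewrite (pcoef_psum (fun b => (kap b)%:C) F).
rewrite (@sum_inj R _ _ F (fun a => (kap a)%:C) (fun X z => if i \in supp X then Normc.normc z ^+ 2 else 0)) //; cbv beta.
- by apply: eq_bigr => a _; rewrite normc_real.
- exact: Finj.
- by move=> X; rewrite Normc.normc0 expr0n; case: ifP.
Qed.

Lemma sqr_le (x y : R) : 0 <= x -> x <= y -> x ^+ 2 <= y ^+ 2.
Proof. by move=> x0 xy; rewrite !expr2; apply: ler_pM. Qed.

Lemma S2_le i : \sum_b (if i \in supp (F b) then q b ^+ 2 else 0) <= N2 ^+ 2.
Proof.
rewrite -S2_eq.
have H0 : 0 <= \sum_(X | i \in supp X) Normc.normc (pcoef (ham kap F) X) ^+ 2.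
  by apply: sumr_ge0 => X _; exact: sqr_ge0.
rewrite -(sqr_sqrtr H0); apply: sqr_le; first exact: sqrtr_ge0.
exact: (lebmax (fun i => Num.sqrt (\sum_(X | i \in supp X) Normc.normc (pcoef (ham kap F) X) ^+ 2)) i).
Qed.

Lemma frobG2 : frob (ham kap F) ^+ 2 = 2 ^+ n * \sum_b q b ^+ 2.
Proof.
rewrite /frob sqr_sqrtr; last by do 2 (apply: sumr_ge0 => ? _); exact: sqr_ge0.
rewrite (frob2_psum (fun b => (kap b)%:C) F).
under eq_bigr do rewrite (pcoef_psum (fun b => (kap b)%:C) F).
rewrite (@sum_inj R _ _ F (fun a => (kap a)%:C) (fun X z => Normc.normc z ^+ 2)) //; cbv beta.
- by congr (_ * _); apply: eq_bigr => a _; rewrite normc_real.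
- exact: Finj.
- by move=> X; rewrite Normc.normc0 expr0n.
Qed.

Lemma Winj a : injective (W a).
Proof.
move=> b1 b2 H; apply: Finj; apply/ffunP => j.
have := congr1 (fun P : pauli n => P j) H; rewrite /W !ffunE; exact: qmul_inj.
Qed.

Lemma W_supp a b i : i \in supp (W a b) -> (i \in supp (E a)) || (i \in supp (F b)).
Proof. by rewrite !in_supp /W ffunE => /qmul_supp. Qed.

Lemma Ac_ov a b : Ac a b -> ov a b.
Proof.
case/existsP => j /andP [/andP [h1 h2] _]; apply/existsP; exists j.
by rewrite !in_supp h1 h2.
Qed.

Lemma pph_sym a b : ~~ Ac a b -> pph R (E a) (F b) = pph R (F b) (E a).
Proof.
rewrite negb_exists => /forallP H; apply: eq_bigr => j _; apply: qph_sym.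
by move: (H j); rewrite !negb_and !negbK.
Qed.

Lemma claim1 Z : Normc.normc (gam Z) <=
  \sum_a \sum_b (if Z == W a b then (if Ac a b then 2 * l a * q b else 0) else 0).
Proof.
rewrite gamE; apply: le_trans (normc_sum _) _; apply: ler_sum => a _.
apply: le_trans (normc_sum _) _; apply: ler_sum => b _.
case: (Z == W a b); last first.
  by rewrite Normc.normc0; case: (Ac a b) => //; rewrite !mulr_ge0 // ?l_ge0 ?q_ge0.
rewrite !Normc.normcM !normc_real -/(l a) -/(q b).
case: (boolP (Ac a b)) => HA; last by rewrite pph_sym // subrr Normc.normc0 mulr0.
have Hd : Normc.normc (pph R (E a) (F b) - pph R (F b) (E a)) <= 2.
  apply: le_trans (le_normcD _ _) _; rewrite normcN /pph !normc_prod.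
  by rewrite !big1 // => j _; rewrite normc_qph.
have := mulr_ge0 (l_ge0 a) (q_ge0 b); have := normc_ge0 (pph R (E a) (F b) - pph R (F b) (E a)).
move=> h1 h2; nra.
Qed.

Lemma claim3 Z :
  \sum_a \sum_b (if Z == W a b then (if Ac a b then l a else 0) else 0) <= (2 * k * k')%:R * N1.
Proof.
case: (boolP [exists a, exists b, Z == W a b]) => [/existsP [a0 /existsP [b0 /eqP HZ]] | Hn]; last first.
  rewrite big1 ?mulr_ge0 ?N1_ge0 // => a _; rewrite big1 // => b _.
  move: Hn; rewrite negb_exists => /forallP /(_ a); rewrite negb_exists => /forallP /(_ b).
  by move/negbTE ->.
have cardZ : (#|supp Z| <= k + k')%N.
  have sub : supp Z \subset supp (E a0) :|: supp (F b0).
    by apply/subsetP => j; rewrite HZ in_setU => /W_supp.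
  apply: leq_trans (subset_leq_card sub) _; rewrite cardsU.
  apply: leq_trans (leq_subr _ _) _; exact: leq_add (Ecard a0) (Fcard b0).
have k1 := leq_trans (Ene a0) (Ecard a0).
have k1' := leq_trans (Fne b0) (Fcard b0).
have Hkk : (k + k' <= 2 * k * k')%N by nia.
apply: le_trans (_ : \sum_a \sum_b (if Z == W a b then
    \sum_(j in supp Z) (if j \in supp (E a) then l a else 0) else 0) <= _).
  apply: ler_sum => a _; apply: ler_sum => b _.
  case: eqP => HZW //.
  have H0 : 0 <= \sum_(j in supp Z) (if j \in supp (E a) then l a else 0).
    by apply: sumr_ge0 => j _; case: ifP => // _; exact: l_ge0.
  case: (boolP (Ac a b)) => HA //.
  case/existsP: HA => j /andP [/andP [h1 h2] h3].
  have jZ : j \in supp Z by rewrite HZW in_supp /W ffunE qmul_eq0.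
  by rewrite (bigD1 j) //= in_supp h1 lerDl; apply: sumr_ge0 => i _; case: ifP => // _; exact: l_ge0.
apply: le_trans (_ : \sum_a \sum_(j in supp Z) (if j \in supp (E a) then l a else 0) <= _).
  apply: ler_sum => a _; apply: sum_if_inj; first exact: Winj.
  by apply: sumr_ge0 => j _; case: ifP => // _; exact: l_ge0.
rewrite exchange_big /=.
apply: le_trans (_ : (k + k')%:R * N1 <= _); last first.
  by apply: ler_wpM2r; [exact: N1_ge0 | rewrite ler_nat].
apply: sum_set_bound => //; [exact: S1_le | exact: N1_ge0].
Qed.

Definition V Z := \sum_a \sum_b
  (if Z == W a b then (if Ac a b then l a * q b ^+ 2 else 0) else 0).

Lemma claim2 Z : Normc.normc (gam Z) ^+ 2 <= (2 * k * k')%:R * N1 * (4 * V Z).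
Proof.
pose u := fun p : 'I_m * 'I_m' => if Z == W p.1 p.2 then (if Ac p.1 p.2 then l p.1 else 0) else 0.
pose v := fun p : 'I_m * 'I_m' => 2 * q p.2.
have u0 : forall p, 0 <= u p.
  by move=> p; rewrite /u; case: (Z == W p.1 p.2) => //; case: (Ac p.1 p.2) => //; exact: l_ge0.
have e1 : \sum_a \sum_b (if Z == W a b then (if Ac a b then 2 * l a * q b else 0) else 0)
    = \sum_p u p * v p.
  rewrite pair_bigA; apply: eq_bigr => p _; rewrite /u /v.
  case: (Z == W p.1 p.2); last by rewrite mul0r.
  case: (Ac p.1 p.2); last by rewrite mul0r.
  by rewrite mulrCA mulrA.
have e2 : \sum_p u p = \sum_a \sum_b (if Z == W a b then (if Ac a b then l a else 0) else 0).
  by rewrite pair_bigA.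
have e3 : \sum_p u p * v p ^+ 2 = 4 * V Z.
  rewrite /V pair_bigA mulr_sumr; apply: eq_bigr => p _; rewrite /u /v.
  case: (Z == W p.1 p.2); last by rewrite mul0r mulr0.
  case: (Ac p.1 p.2); last by rewrite mul0r mulr0.
  by rewrite exprMn; ring.
apply: le_trans (_ : (\sum_p u p * v p) ^+ 2 <= _).
  apply: sqr_le; [exact: normc_ge0 | rewrite -e1; exact: claim1].
apply: le_trans (CS v u0) _.
rewrite e3; apply: ler_wpM2r.
  rewrite mulr_ge0 // /V; apply: sumr_ge0 => a _; apply: sumr_ge0 => b _.
  case: (Z == W a b) => //; case: (Ac a b) => //; rewrite mulr_ge0 ?sqr_ge0 //; exact: l_ge0.
rewrite e2; exact: claim3.
Qed.

Lemma claim4 (h : pauli n -> bool) (U : 'I_m -> 'I_m' -> R) :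
  \sum_Z (if h Z then \sum_a \sum_b (if Z == W a b then U a b else 0) else 0)
  = \sum_a \sum_b (if h (W a b) then U a b else 0).
Proof.
transitivity (\sum_Z \sum_a \sum_b (if Z == W a b then (if h (W a b) then U a b else 0) else 0)).
  apply: eq_bigr => Z _; case: (boolP (h Z)) => hZ.
    apply: eq_bigr => a _; apply: eq_bigr => b _.
    by case: (Z =P W a b) => // <-; rewrite hZ.
  symmetry; apply: big1 => a _; apply: big1 => b _.
  by case: (Z =P W a b) => // <-; rewrite (negbTE hZ).
rewrite exchange_big; apply: eq_bigr => a _; rewrite exchange_big; apply: eq_bigr => b _.
by rewrite -big_mkcond big_pred1_eq.
Qed.

Definition ovt a b := if ov a b then l a * q b ^+ 2 else 0.
Lemma ovt_ge0 a b : 0 <= ovt a b.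
Proof. by rewrite /ovt; case: (ov a b) => //; rewrite mulr_ge0 ?sqr_ge0 ?l_ge0. Qed.

Lemma T2_bound i : \sum_a \sum_b (if i \in supp (E a) then ovt a b else 0) <= k%:R * N1 * N2 ^+ 2.
Proof.
have H0 : 0 <= k%:R * N2 ^+ 2 by rewrite mulr_ge0 ?sqr_ge0.
apply: le_trans (_ : \sum_a (if i \in supp (E a) then l a else 0) * (k%:R * N2 ^+ 2) <= _); last first.
  apply: le_trans (_ : N1 * (k%:R * N2 ^+ 2) <= _); last by rewrite mulrA [N1 * _]mulrC.
  rewrite -mulr_suml; apply: ler_pM => //; last exact: S1_le.
  by apply: sumr_ge0 => a _; case: ifP => // _; exact: l_ge0.
apply: ler_sum => a _; case: (boolP (i \in supp (E a))) => ha; last first.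
  by rewrite big1 ?mul0r.
have -> : \sum_b ovt a b = l a * \sum_b (if ov a b then q b ^+ 2 else 0).
  by rewrite mulr_sumr; apply: eq_bigr => b _; rewrite /ovt; case: (ov a b); rewrite ?mulr0.
apply: ler_wpM2l; first exact: l_ge0.
apply: le_trans (@ov_bound R _ _ (ov a) (supp (E a)) (fun b => supp (F b)) (fun b => q b ^+ 2) _ _) _.
- by move=> b; exact: sqr_ge0.
- by move=> b /existsP [j /andP [h1 h2]]; exists j.
apply: sum_set_bound; [exact: S2_le | exact: sqr_ge0 | exact: Ecard].
Qed.

Lemma ovsum_bound b : \sum_a (if ov a b then l a else 0) <= k'%:R * N1.
Proof.
apply: le_trans (@ov_bound R _ _ (fun a => ov a b) (supp (F b)) (fun a => supp (E a)) l _ _) _.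
- exact: l_ge0.
- by move=> a /existsP [j /andP [h1 h2]]; exists j.
apply: sum_set_bound; [exact: S1_le | exact: N1_ge0 | exact: Fcard].
Qed.

Lemma ovt_sum b : \sum_a ovt a b = q b ^+ 2 * \sum_a (if ov a b then l a else 0).
Proof.
by rewrite mulr_sumr; apply: eq_bigr => a _; rewrite /ovt; case: (ov a b); rewrite ?mulr0 // mulrC.
Qed.

Lemma T1_bound i : \sum_a \sum_b (if i \in supp (F b) then ovt a b else 0) <= k'%:R * N1 * N2 ^+ 2.
Proof.
have H0 : 0 <= k'%:R * N1 by rewrite mulr_ge0 ?N1_ge0.
rewrite exchange_big /=.
apply: le_trans (_ : \sum_b (if i \in supp (F b) then q b ^+ 2 else 0) * (k'%:R * N1) <= _); last first.
  apply: le_trans (_ : N2 ^+ 2 * (k'%:R * N1) <= _); last by rewrite mulrC.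
  rewrite -mulr_suml; apply: ler_pM => //; last exact: S2_le.
  by apply: sumr_ge0 => b _; case: ifP => // _; exact: sqr_ge0.
apply: ler_sum => b _; case: (boolP (i \in supp (F b))) => hb; last first.
  by rewrite big1 ?mul0r.
rewrite ovt_sum; apply: ler_wpM2l; [exact: sqr_ge0 | exact: ovsum_bound].
Qed.

Lemma claim5 i : \sum_a \sum_b (if i \in supp (W a b) then (if Ac a b then l a * q b ^+ 2 else 0) else 0)
  <= (k + k')%:R * N1 * N2 ^+ 2.
Proof.
apply: le_trans (_ : \sum_a \sum_b ((if i \in supp (E a) then ovt a b else 0)
     + (if i \in supp (F b) then ovt a b else 0)) <= _).
  apply: ler_sum => a _; apply: ler_sum => b _.
  have h1 : 0 <= (if i \in supp (E a) then ovt a b else 0) by case: ifP => _ //; exact: ovt_ge0.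
  have h2 : 0 <= (if i \in supp (F b) then ovt a b else 0) by case: ifP => _ //; exact: ovt_ge0.
  case: (boolP (i \in supp (W a b))) => hi; last exact: addr_ge0.
  case: (boolP (Ac a b)) => HA; last exact: addr_ge0.
  have hov := Ac_ov HA.
  have e : l a * q b ^+ 2 = ovt a b by rewrite /ovt hov.
  move: (W_supp hi) h1 h2; rewrite e.
  case: (i \in supp (E a)); case: (i \in supp (F b)) => //= _ h1 h2.
  - by rewrite lerDl.
  - by rewrite addr0.
  - by rewrite add0r.
under eq_bigr do rewrite big_split; rewrite big_split /=.
rewrite natrD !mulrDl; apply: lerD; [exact: T2_bound | exact: T1_bound].
Qed.

Lemma claim5f : \sum_a \sum_b (if Ac a b then l a * q b ^+ 2 else 0) <= k'%:R * N1 * \sum_b q b ^+ 2.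
Proof.
apply: le_trans (_ : \sum_a \sum_b ovt a b <= _).
  apply: ler_sum => a _; apply: ler_sum => b _.
  case: (boolP (Ac a b)) => HA; last exact: ovt_ge0.
  by rewrite /ovt (Ac_ov HA).
rewrite exchange_big /= [_ * \sum_b _]mulrC mulr_suml; apply: ler_sum => b _.
rewrite ovt_sum; apply: ler_wpM2l; [exact: sqr_ge0 | exact: ovsum_bound].
Qed.

End Main.

Lemma arith1 (R : realType) (k k' : nat) (x y : R) : 0 <= x -> 0 <= y ->
  (2 * k * k')%:R * x * (4 * ((k + k')%:R * x * y ^+ 2)) <= (4%:R * k'%:R * k%:R * x * y) ^+ 2.
Proof.
move=> x0 y0.
have h : (2 * k * k' * 4 * (k + k') <= 4 * k' * k * (4 * k' * k))%N.
  case: k => [|k1]; first by rewrite ?muln0 ?mul0n.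
  case: k' => [|k2]; first by rewrite ?muln0 ?mul0n.
  nia.
have X0 : 0 <= x ^+ 2 * y ^+ 2 by rewrite mulr_ge0 ?sqr_ge0.
have eL : (2 * k * k')%:R * x * (4 * ((k + k')%:R * x * y ^+ 2))
   = (2 * k * k' * 4 * (k + k'))%:R * (x ^+ 2 * y ^+ 2) :> R.
  by rewrite !natrM !natrD; ring.
have eR : (4%:R * k'%:R * k%:R * x * y) ^+ 2
   = (4 * k' * k * (4 * k' * k))%:R * (x ^+ 2 * y ^+ 2) :> R.
  by rewrite !natrM; ring.
rewrite eL eR; apply: ler_pM => //; by rewrite ler_nat.
Qed.

Lemma arith2 (R : realType) (k k' n : nat) (x s : R) : 0 <= x -> 0 <= s ->
  2 ^+ n * ((2 * k * k')%:R * x * (4 * (k'%:R * x * s)))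
  <= (4%:R * k'%:R * k%:R * x) ^+ 2 * (2 ^+ n * s).
Proof.
move=> x0 s0.
have h : (2 * k * k' * 4 * k' <= 4 * k' * k * (4 * k' * k))%N.
  case: k => [|k1]; first by rewrite ?muln0 ?mul0n.
  case: k' => [|k2]; first by rewrite ?muln0 ?mul0n.
  nia.
have X0 : 0 <= 2 ^+ n * (x ^+ 2 * s) by rewrite !mulr_ge0 ?sqr_ge0 ?exprn_ge0.
have eL : 2 ^+ n * ((2 * k * k')%:R * x * (4 * (k'%:R * x * s)))
   = (2 * k * k' * 4 * k')%:R * (2 ^+ n * (x ^+ 2 * s)) :> R.
  by rewrite !natrM; ring.
have eR : (4%:R * k'%:R * k%:R * x) ^+ 2 * (2 ^+ n * s)
   = (4 * k' * k * (4 * k' * k))%:R * (2 ^+ n * (x ^+ 2 * s)) :> R.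
  by rewrite !natrM; ring.
rewrite eL eR; apply: ler_pM => //; by rewrite ler_nat.
Qed.

Theorem lemma3p9 :
  exists c : nat,
  forall (R : realType) (n k k' m m' : nat)
         (lam : 'I_m -> R) (E : 'I_m -> pauli n)
         (kap : 'I_m' -> R) (F : 'I_m' -> pauli n),
    k_local k E -> k_local k' F ->
    let H := ham lam E in
    let G := ham kap F in
    norm2loc (commutator H G)
      <= c%:R * k'%:R * k%:R * norm1loc H * norm2loc G
    /\ frob (commutator H G)
      <= c%:R * k'%:R * k%:R * norm1loc H * frob G.
Proof.
exists 4%N => R n k k' m m' lam E kap F hE hF H G.
have N10 : 0 <= norm1loc H by exact: (N1_ge0 lam E).
have N20 : 0 <= norm2loc G by exact: (N2_ge0 kap F).
have pc : forall Z, pcoef (commutator H G) Z = gam lam E kap F Z.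
  by move=> Z; apply: pcoef_ext => x y; exact: comm_eq.
have c2 := claim2 lam kap hE hF.
split.
  apply: bmax_le; first by rewrite !mulr_ge0.
  move=> i.
  set B := (4%:R * k'%:R * k%:R * norm1loc H * norm2loc G).
  have B0 : 0 <= B by rewrite /B !mulr_ge0.
  rewrite -[B]ger0_norm // -sqrtr_sqr; apply: ler_wsqrtr.
  rewrite big_mkcond /=.
  under eq_bigr do rewrite pc.
  apply: le_trans (_ : \sum_Z (if i \in supp Z then
      (2 * k * k')%:R * norm1loc H * (4 * V lam E kap F Z) else 0) <= _).
    apply: ler_sum => Z _; case: (i \in supp Z) => //; exact: c2.
  have e4 : \sum_Z (if i \in supp Z then V lam E kap F Z else 0)
     = \sum_a \sum_b (if i \in supp (W E F a b) then
          (if Ac E F a b then l lam a * q kap b ^+ 2 else 0) else 0).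
    exact: (claim4 E F (fun Z => i \in supp Z) (fun a b => if Ac E F a b then l lam a * q kap b ^+ 2 else 0)).
  apply: le_trans (_ : (2 * k * k')%:R * norm1loc H * (4 * ((k + k')%:R * norm1loc H * norm2loc G ^+ 2)) <= _); last first.
    exact: arith1.
  apply: le_trans (_ : (2 * k * k')%:R * norm1loc H * (4 * \sum_Z (if i \in supp Z then V lam E kap F Z else 0)) <= _).
    rewrite !mulr_sumr; apply: ler_sum => Z _; case: (i \in supp Z); by rewrite ?mulr0.
  apply: ler_wpM2l; first by rewrite mulr_ge0.
  apply: ler_wpM2l => //.
  rewrite e4; exact: (claim5 lam kap hE hF i).
set B := (4%:R * k'%:R * k%:R * norm1loc H * frob G).
have F0 : 0 <= frob G by exact: sqrtr_ge0.
have B0 : 0 <= B by rewrite /B !mulr_ge0.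
rewrite (frob_ext (comm_eq lam E kap F)).
rewrite -[B]ger0_norm // -sqrtr_sqr; apply: ler_wsqrtr.
rewrite frob2_psum.
rewrite /B exprMn (frobG2 kap hF).
have e4 : \sum_Z V lam E kap F Z
     = \sum_a \sum_b (if Ac E F a b then l lam a * q kap b ^+ 2 else 0).
  exact: (claim4 E F (fun Z => true) (fun a b => if Ac E F a b then l lam a * q kap b ^+ 2 else 0)).
apply: le_trans (_ : 2 ^+ n * ((2 * k * k')%:R * norm1loc H * (4 * (k'%:R * norm1loc H * \sum_b q kap b ^+ 2))) <= _); last first.
  by apply: arith2 => //; apply: sumr_ge0 => b _; exact: sqr_ge0.
apply: ler_wpM2l; first by rewrite exprn_ge0.
apply: le_trans (_ : \sum_Z (2 * k * k')%:R * norm1loc H * (4 * V lam E kap F Z) <= _).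
  apply: ler_sum => Z _; exact: c2.
rewrite -mulr_sumr -mulr_sumr e4.
apply: ler_wpM2l; first by rewrite mulr_ge0.
apply: ler_wpM2l => //.
exact: (claim5f lam kap hE hF).
Qed.
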